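(* Let $K$ be a field of characteristic zero, let $d\geq 2$, and let $K\langle X_d\rangle=K\langle x_1,\ldots,x_d\rangle$ be the free associative unital algebra of rank $d$ over $K$. Let $C_d$ be the cyclic group of order $d$ generated by the linear map $\rho$ with $\rho(x_1)=x_2,\ \rho(x_2)=x_3,\ \ldots,\ \rho(x_{d-1})=x_d,\ \rho(x_d)=x_1$, acting on $K\langle X_d\rangle$ by algebra automorphisms, and let $K\langle X_d\rangle^{C_d}=\{f\in K\langle X_d\rangle : \rho(f)=f\}$ be the algebra of invariants. Then: (i) The Hilbert series of $K\langle X_d\rangle^{C_d}$ is \[ H\big(K\langle X_d\rangle^{C_d},t\big)=\frac{1-(d-1)t}{1-dt}, \] and $\dim\big((K\langle X_d\rangle^{C_d})^{(n)}\big)=d^{n-1}$ for all $n\geq 1$. (ii) The generating function of a set of homogeneous free generators of the (free) algebra $K\langle X_d\rangle^{C_d}$ is \[ g(t)=\frac{t}{1-(d-1)t}, \] i.e. for each $n\geq 1$ a system of homogeneous free generators has exactly $(d-1)^{n-1}$ elements of degree $n$.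
   Context: $K\langle X_d\rangle$ is graded by total degree in $x_1,\ldots,x_d$; $(K\langle X_d\rangle^{C_d})^{(n)}$ denotes the homogeneous component of degree $n$ of the invariant algebra. The Hilbert series of a graded subalgebra $A$ is $H(A,t)=\sum_{n\geq 0}\dim A^{(n)}t^n$. The algebra of invariants $K\langle X_d\rangle^{C_d}$ is a free associative algebra (on a set of homogeneous generators), and the generating function of a set $Z$ of homogeneous free generators is $\sum_{n\geq1}|Z_n|t^n$ where $Z_n$ is the set of generators of degree $n$. *)

(* Defs.v *)
From HB Require Import structures.
From mathcomp Require Import all_boot all_order all_algebra.
Set Implicit Arguments. Unset Strict Implicit. Unset Printing Implicit Defensive.
Import GRing.Theory.
Local Open Scope ring_scope.

(* The free associative algebra K<x_1,...,x_d> is modelled by coefficient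
   functions on words: an element is f : seq 'I_d -> K (f w = coefficient of
   the word w), required to have finite support (nc_fin).  Letter i : 'I_d
   stands for x_{i+1}. *)

Definition ncpoly (d : nat) (K : fieldType) := seq 'I_d -> K.

Section NC.
Variables (d : nat) (K : fieldType).

Definition nc_fin (f : ncpoly d K) : Prop :=
  exists N : nat, forall w : seq 'I_d, (N <= size w)%N -> f w = 0.

Definition nc_mul (f g : ncpoly d K) : ncpoly d K :=
  fun w => \sum_(i < (size w).+1) f (take i w) * g (drop i w).

Definition nc_one : ncpoly d K := fun w => if w is [::] then 1 else 0.

Definition nc_prod (fs : seq (ncpoly d K)) : ncpoly d K := foldr nc_mul nc_one fs.

(* rho : x_i |-> x_{i+1} (indices mod d), acting letterwise on words;
   rho(f) = sum_w f(w) rho(w), so rho(f)(w) = f(rho^{-1} w). *)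
Definition nc_rho (f : ncpoly d K) : ncpoly d K :=
  fun w => f (map (@ord_pred d) w).

Definition nc_invariant (f : ncpoly d K) : Prop := forall w, nc_rho f w = f w.

Definition nc_homog (n : nat) (f : ncpoly d K) : Prop :=
  forall w : seq 'I_d, size w != n -> f w = 0.

(* A system of homogeneous generators: Z n = the list of generators of degree n.
   A monomial in the generators is indexed by a sequence of pairs (n, i),
   meaning the i-th generator of degree n. *)
Definition gen_valid (Z : nat -> seq (ncpoly d K)) (p : nat * nat) : bool :=
  (p.2 < size (Z p.1))%N.

Definition gen_mono (Z : nat -> seq (ncpoly d K)) (m : seq (nat * nat)) : ncpoly d K :=
  nc_prod [seq nth (fun _ => 0) (Z p.1) p.2 | p <- m].

Definition free_gens (Z : nat -> seq (ncpoly d K)) : Prop :=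
  [/\ forall n i, (i < size (Z n))%N ->
        nc_homog n (nth (fun _ => 0) (Z n) i) /\ nc_invariant (nth (fun _ => 0) (Z n) i),
      forall (s : seq (seq (nat * nat))) (c : seq (nat * nat) -> K),
        uniq s -> all (all (gen_valid Z)) s ->
        (forall w, \sum_(m <- s) c m * gen_mono Z m w = 0) ->
        forall m, m \in s -> c m = 0
    & forall f : ncpoly d K, nc_fin f -> nc_invariant f ->
        exists (s : seq (seq (nat * nat))) (c : seq (nat * nat) -> K),
          all (all (gen_valid Z)) s /\
          forall w, f w = \sum_(m <- s) c m * gen_mono Z m w].

(* Homogeneous component of degree n of K<X_d>: functions on words of length n,
   i.e. the vector space {ffun n.-tuple 'I_d -> K}. *)
Definition rho_minus_id (n : nat) (f : {ffun n.-tuple 'I_d -> K^o}) :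
    {ffun n.-tuple 'I_d -> K^o} :=
  [ffun w => f (map_tuple (@ord_pred d) w) - f w].

Definition inv_component (n : nat) : {vspace {ffun n.-tuple 'I_d -> K^o}} :=
  lker (linfun (@rho_minus_id n)).

Definition inv_dim (n : nat) : nat := \dim (inv_component n).

End NC.

Definition hilb_trunc (d : nat) (K : fieldType) (N : nat) : {poly int} :=
  \poly_(n < N.+1) (inv_dim d K n)%:Z.

(* Main.v *)
Require Import Defs.
From HB Require Import structures.
From mathcomp Require Import all_boot all_order all_algebra.
From Stdlib Require Import FunctionalExtensionality.
From mathcomp Require Import zify ring.
Set Implicit Arguments. Unset Strict Implicit. Unset Printing Implicit Defensive.
Import GRing.Theory.
Local Open Scope ring_scope.

Section Gen.
Variables (d : nat) (K : fieldType).
Local Notation P := (ncpoly d K).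

Lemma mul_homogL k (f g : P) w : nc_homog k f ->
  nc_mul f g w = if (k <= size w)%N then f (take k w) * g (drop k w) else 0.
Proof.
move=> hf; rewrite /nc_mul.
rewrite (bigID (fun i : 'I_(size w).+1 => (i == k :> nat))) /=.
rewrite [X in _ + X]big1 ?addr0; last first.
  move=> i /negPf ik; rewrite hf ?mulr0 ?mul0r //.
  by rewrite size_take_min; have := ltn_ord i; rewrite ltnS => /minn_idPl ->; rewrite ik.
rewrite (big_ord1_eq _ (fun i => f (take i w) * g (drop i w))) ltnS.
by [].
Qed.

Lemma homog_mul p q (f g : P) : nc_homog p f -> nc_homog q g ->
  nc_homog (p + q) (nc_mul f g).
Proof.
move=> hf hg w hw; rewrite (mul_homogL _ _ hf); case: ifP => // hp.
rewrite hg ?mulr0 // size_drop; apply: contra hw => /eqP <-.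
by rewrite subnKC.
Qed.

Lemma homog_one : nc_homog 0 (@nc_one d K).
Proof. by case. Qed.

Lemma inv_mul (f g : P) : nc_invariant f -> nc_invariant g ->
  nc_invariant (nc_mul f g).
Proof.
move=> hf hg w; rewrite /nc_rho /nc_mul size_map.
apply: eq_bigr => i _; rewrite -map_take -map_drop.
by have := hf (take i w); have := hg (drop i w); rewrite /nc_rho => -> ->.
Qed.

Lemma inv_one : nc_invariant (@nc_one d K).
Proof. by case. Qed.

Lemma mul1r_nc (f : P) : nc_mul f (@nc_one d K) = f.
Proof.
apply: functional_extensionality => w; rewrite /nc_mul big_ord_recr /=.
rewrite take_size drop_size /= mulr1 big1 ?add0r // => i _.
rewrite /nc_one; case E: (drop i w) => [|? ?]; last by rewrite mulr0.
by move: E => /eqP; rewrite -size_eq0 size_drop subn_eq0 leqNgt ltn_ord.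
Qed.

End Gen.

Fact rmi_semilinear (d : nat) (K : fieldType) (n : nat) :
  semilinear (@rho_minus_id d K n).
Proof.
split=> [a f | f g]; apply/ffunP => t; rewrite !ffunE /=.
  by rewrite scalerBr.
by rewrite addrACA opprD.
Qed.
HB.instance Definition _ (d : nat) (K : fieldType) (n : nat) :=
  GRing.isSemilinear.Build K _ _ _ (@rho_minus_id d K n) (rmi_semilinear d K n).

Lemma mem_inv_comp (d : nat) (K : fieldType) (n : nat) v :
  (v \in inv_component d K n) = [forall t, v (map_tuple (@ord_pred d) t) == v t].
Proof.
rewrite memv_ker lfunE /=; apply/eqP/forallP => [H t | H].
  by move/ffunP: H => /(_ t); rewrite !ffunE => /eqP; rewrite subr_eq0.
by apply/ffunP => t; rewrite !ffunE; apply/eqP; rewrite subr_eq0; apply: H.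
Qed.

Fixpoint Mrec (a : nat -> nat) (f n : nat) : nat :=
  if f is f'.+1 then (if n is n'.+1 then \sum_(k < n'.+1) a k.+1 * Mrec a f' (n' - k) else 1%N)
  else (n == 0%N).

Section Count.
Variables (d : nat) (K : fieldType) (Z : nat -> seq (ncpoly d K)).
Local Notation gen n i := (nth (fun _ => 0) (Z n) i).

Definition degm (m : seq (nat * nat)) := sumn (map fst m).
Definition Alph n := [seq (k, i) | k <- iota 1 n, i <- iota 0 (size (Z k))].
Fixpoint monsF (f n : nat) : seq (seq (nat * nat)) :=
  if f is f'.+1 then
    (if n is 0 then [:: [::]] else [seq p :: m | p <- Alph n, m <- monsF f' (n - p.1)])
  else (if n is 0 then [:: [::]] else [::]).

Lemma mono_homog m : (forall n i, (i < size (Z n))%N -> nc_homog n (gen n i)) ->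
  all (gen_valid Z) m -> nc_homog (degm m) (gen_mono Z m).
Proof.
move=> H; elim: m => [|p m IH] /=; first by move=> _; apply: homog_one.
by case/andP => hp hm; apply: homog_mul; [apply: H | apply: IH].
Qed.

Lemma mono_inv m : (forall n i, (i < size (Z n))%N -> nc_invariant (gen n i)) ->
  all (gen_valid Z) m -> nc_invariant (gen_mono Z m).
Proof.
move=> H; elim: m => [|p m IH] /=; first by move=> _; apply: inv_one.
by case/andP => hp hm; apply: inv_mul; [apply: H | apply: IH].
Qed.

Lemma Z0_nil : free_gens Z -> Z 0 = [::].
Proof.
case=> H1 H2 _; case E: (Z 0) => [|g l] //; exfalso.
have [hg _] : nc_homog 0 g /\ nc_invariant g by have := H1 0%N 0%N; rewrite E; apply.
pose c (m : seq (nat * nat)) : K := if m == [::] then - g [::] else 1.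
have hg1 : gen_mono Z [:: (0%N, 0%N)] = g by rewrite /gen_mono /nc_prod /= mul1r_nc E.
have hv : all (all (gen_valid Z)) [:: [:: (0%N, 0%N)]; [::]] by rewrite /= /gen_valid /= E.
have hs : forall w, \sum_(m <- [:: [:: (0%N, 0%N)]; [::]]) c m * gen_mono Z m w = 0.
  move=> w; rewrite !big_cons big_nil addr0 hg1 /c /=.
  case: w => [|x w]; rewrite /gen_mono /= /nc_one.
  by rewrite mulr1 [1 * _]mul1r addrN.
  by rewrite mulr0 addr0 [1 * _]mul1r hg.
have := H2 _ c _ hv hs [:: (0%N, 0%N)]; rewrite inE eqxx /c /= => /(_ isT isT).
by apply/eqP; apply: oner_neq0.
Qed.

Lemma valid_pos p : Z 0 = [::] -> gen_valid Z p -> (0 < p.1)%N.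
Proof. by move=> Z0; case: p => [[|k] i] //; rewrite /gen_valid /= Z0. Qed.

Lemma mem_Alph n p : (p \in Alph n) = [&& (0 < p.1)%N, (p.1 <= n)%N & gen_valid Z p].
Proof.
case: p => k i; apply/allpairsPdep/idP => [[k' [i' [hk hi [-> ->]]]] | ].
  by move: hk hi; rewrite !mem_iota /gen_valid /= add1n ltnS => /andP[-> ->]; rewrite add0n.
case/and3P => /= h1 h2 h3; exists k, i; split => //; rewrite mem_iota //.
  by rewrite h1 add1n ltnS.
Qed.

Lemma mem_monsF f n m : Z 0 = [::] -> (n <= f)%N ->
  (m \in monsF f n) = all (gen_valid Z) m && (degm m == n).
Proof.
move=> Z0; elim: f n m => [|f IH] n m.
  rewrite leqn0 => /eqP ->; rewrite inE; case: m => [|p m] //=.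
  apply/esym/negbTE; rewrite negb_and; case: (boolP (gen_valid Z p)) => //= hp.
  by rewrite /degm /= -lt0n addn_gt0 (valid_pos Z0 hp) orbT.
case: n => [|n] hn.
  rewrite inE; case: m => [|p m] //=.
  apply/esym/negbTE; rewrite negb_and; case: (boolP (gen_valid Z p)) => //= hp.
  by rewrite /degm /= -lt0n addn_gt0 (valid_pos Z0 hp) orbT.
rewrite /=; apply/allpairsPdep/idP => [[p [m' [hp hm ->]]] | ].
  move: hp; rewrite mem_Alph => /and3P[h1 h2 h3].
  rewrite IH in hm; last by move: (p.1) h1 => k h1; lia.
  case/andP: hm => hm /eqP hd; rewrite /= h3 hm /= /degm /=.
  by rewrite -/(degm m') hd subnKC.
case: m => [|p m] //= /andP[/andP[hp hm] hd]; exists p, m; split => //.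
  rewrite mem_Alph hp (valid_pos Z0 hp) -(eqP hd) /degm /= leq_addr //.
have hd' : degm m = (n.+1 - p.1)%N by rewrite -(eqP hd) /degm /= addKn.
rewrite IH ?hm ?hd' ?eqxx //.
by move: (valid_pos Z0 hp) hn; move: (p.1) => k; lia.
Qed.

Lemma uniq_Alph n : uniq (Alph n).
Proof.
apply: allpairs_uniq_dep; first exact: iota_uniq.
  by move=> *; apply: iota_uniq.
by case=> [k i] [k' i'] _ _ /= [-> ->].
Qed.

Lemma uniq_monsF f n : uniq (monsF f n).
Proof.
elim: f n => [|f IH] [|n] //=.
apply: allpairs_uniq_dep; first exact: uniq_Alph.
  by move=> *; apply: IH.
by case=> [p m] [p' m'] _ _ /= [-> ->].
Qed.

Lemma size_monsF f n : size (monsF f n) = Mrec (fun k => size (Z k)) f n.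
Proof.
elim: f n => [|f IH] [|n] //=.
rewrite size_allpairs_dep sumnE big_map /Alph big_allpairs_dep /=.
have E : 1 :: iota 2 n = [seq (1 + k)%N | k <- iota 0 n.+1] by rewrite -[1 :: _]/(iota (1+0) n.+1) iotaDl.
rewrite E big_map -/(index_iota 0 n.+1) big_mkord.
apply: eq_bigr => k _; rewrite add1n big_const_seq.
rewrite count_predT size_iota IH subSS.
by elim: (size (Z k.+1)) => //= j ->; rewrite mulSn.
Qed.

Definition resn n (f : ncpoly d K) : {ffun n.-tuple 'I_d -> K^o} := [ffun t => f (val t)].


Lemma inv_dim_count n : free_gens Z -> inv_dim d K n = size (monsF n n).
Proof.
move=> hZ; have Z0 := Z0_nil hZ; case: hZ => H1 H2 H3.
set ms := monsF n n.
set F := [seq resn n (gen_mono Z m) | m <- ms].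
have validm : forall m, m \in ms -> all (gen_valid Z) m.
  by move=> m; rewrite mem_monsF // => /andP[].
have homm : forall m, m \in ms -> nc_homog n (gen_mono Z m).
  move=> m; rewrite mem_monsF // => /andP[hv /eqP <-].
  by apply: mono_homog hv => k i /H1 [].
have spanE : (<<F>> = inv_component d K n)%VS.
  apply/eqP; rewrite eqEsubv; apply/andP; split.
    apply/span_subvP => x /mapP [m hm ->]; rewrite mem_inv_comp.
    apply/forallP => t; rewrite !ffunE /=.
    have := mono_inv (fun k i h => (H1 k i h).2) (validm m hm) (val t).
    by rewrite /nc_rho => ->.
  apply/subvP => v hv.
  pose f : ncpoly d K := fun w =>
    if (insub w : option (n.-tuple 'I_d)) is Some t then v t else 0.
  have fval : forall t : n.-tuple 'I_d, f (val t) = v t by move=> t; rewrite /f valK.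
  have ffin : nc_fin f.
    exists n.+1 => w hw; rewrite /f insubN //.
    by apply/negP => /eqP E; move: hw; rewrite E ltnn.
  have finv : nc_invariant f.
    move=> w; rewrite /nc_rho; case: (boolP (size w == n)) => hw.
      have -> : w = val (Tuple hw) by [].
      rewrite -[map _ _]/(val (map_tuple (@ord_pred d) (Tuple hw))) !fval.
      by move: hv; rewrite mem_inv_comp => /forallP/(_ (Tuple hw))/eqP.
    by rewrite /f !insubN // size_map.
  have [s [c [hs hf]]] := H3 f ffin finv.
  have -> : v = \sum_(m <- s) c m *: resn n (gen_mono Z m).
    apply/ffunP => t; rewrite sum_ffunE -fval hf; apply: eq_bigr => m _.
    by rewrite !ffunE.
  rewrite big_seq; apply: memv_suml => m ms_m; apply: memvZ.
  have hvm : all (gen_valid Z) m by move/allP: hs => /(_ m ms_m).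
  case: (boolP (degm m == n)) => hd.
    by apply: memv_span; apply/mapP; exists m => //; rewrite mem_monsF // hvm hd.
  have -> : resn n (gen_mono Z m) = 0.
    apply/ffunP => t; rewrite !ffunE; apply: (mono_homog _ hvm).
      by move=> k i /H1 [].
    by rewrite size_tuple eq_sym.
  exact: mem0v.
have hsz : size F = size ms by rewrite size_map.
have freeF : free F.
  suff : free (in_tuple F) by [].
  apply/freeP => k hk i.
  pose c (m : seq (nat * nat)) := k (insubd i (index m ms)).
  have ck : forall j : 'I_(size F), c (nth [::] ms j) = k j.
    move=> j; rewrite /c index_uniq ?uniq_monsF //; last by rewrite -hsz.
    by congr k; apply: val_inj; rewrite val_insubd /= ltn_ord.
  have hsum : forall w, \sum_(m <- ms) c m * gen_mono Z m w = 0.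
    move=> w; case: (boolP (size w == n)) => hw.
      move/ffunP: hk => /(_ (Tuple hw)); rewrite sum_ffunE ffunE => E; apply: etrans E.
      rewrite (big_nth [::]) -hsz big_mkord; apply: eq_bigr => j _.
      by rewrite ck ffunE /= (nth_map [::]) -?hsz // ffunE.
    rewrite big_seq big1 // => m hm; rewrite (homm m hm) ?mulr0 //.
  have hv : all (all (gen_valid Z)) ms by apply/allP => m /validm.
  have := H2 ms c (uniq_monsF _ _) hv hsum (nth [::] ms i).
  by rewrite ck; apply; rewrite mem_nth // -hsz.
rewrite /inv_dim -spanE; move: freeF; rewrite /free => /eqP ->.
by rewrite size_map.
Qed.

End Count.

Fixpoint tup (A : seq nat) (k : nat) : seq (seq nat) :=
  if k is k'.+1 then [seq a :: s | a <- A, s <- tup A k'] else [:: [::]].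

Lemma mem_tup A k s : (s \in tup A k) = (size s == k) && all (mem A) s.
Proof.
elim: k s => [|k IH] s /=; first by rewrite inE; case: s.
apply/allpairsPdep/idP => [[a [t [ha ht ->]]] | ].
  by move: ht; rewrite IH /= eqSS ha => /andP[-> ->].
case: s => [|a s] //=; rewrite eqSS => /andP[hs /andP[ha hs']].
by exists a, s; rewrite IH hs hs'.
Qed.

Lemma uniq_tup A k : uniq A -> uniq (tup A k).
Proof.
move=> uA; elim: k => [|k IH] //=.
apply: allpairs_uniq_dep => //.
by case=> [a s] [a' s'] _ _ /= [-> ->].
Qed.

Lemma size_tup A k : size (tup A k) = (size A ^ k)%N.
Proof.
elim: k => [|k IH] //=; rewrite size_allpairs_dep expnS -IH.
by move: (size (tup A k)) => c; elim: A {IH} => //= a A ->; rewrite mulSn.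
Qed.

Lemma all2_size (T1 T2 : Type) (r : T1 -> T2 -> bool) s t :
  all2 r s t -> size s = size t.
Proof. by elim: s t => [|x s IH] [|y t] //= /andP[_ /IH ->]. Qed.

Lemma all2_cat (T1 T2 : Type) (r : T1 -> T2 -> bool) s1 s2 t1 t2 :
  size s1 = size t1 -> all2 r (s1 ++ s2) (t1 ++ t2) = all2 r s1 t1 && all2 r s2 t2.
Proof.
elim: s1 t1 => [|x s IH] [|y t] //= [hs]; by rewrite IH // andbA.
Qed.

Definition mt (a b : nat) := (a == 0%N) || (a == b).

Section Pat.
Variables (d : nat) (K : fieldType).
Local Notation P := (ncpoly d K).

Definition dif (x y : 'I_d) : nat := ((y + d - x) %% d)%N.

Definition Qp (p : seq nat) : P := fun w =>
  if w is x :: w' then (all2 mt p (pairmap dif x w'))%:R else 0.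

Definition Aset := iota 1 d.-1.
Definition Z0 (n : nat) : seq P := if n is k.+1 then map Qp (tup Aset k) else [::].
Definition cg (g : nat * nat) := nth [::] (tup Aset g.1.-1) g.2.
Fixpoint pat (m : seq (nat * nat)) : seq nat :=
  if m is g :: m' then cg g ++ (if m' is [::] then [::] else 0%N :: pat m') else [::].

Lemma modn_lt2 a : (a < d + d)%N -> (a %% d = if a < d then a else a - d)%N.
Proof.
move=> h; case: ltnP => h2; first by rewrite modn_small.
rewrite -{1}(subnK h2) modnDr modn_small //; by move: h h2; lia.
Qed.

Lemma difE (x y : 'I_d) : dif x y = if (x <= y)%N then (y - x)%N else (y + d - x)%N.
Proof.
rewrite /dif modn_lt2; last by move: (ltn_ord x) (ltn_ord y); lia.
by move: (ltn_ord x) (ltn_ord y); case: ifP; case: ifP; lia.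
Qed.

Lemma dif_lt (x y : 'I_d) : (dif x y < d)%N.
Proof. by rewrite /dif ltn_pmod // (leq_ltn_trans _ (ltn_ord x)). Qed.

Lemma val_ord_pred (x : 'I_d) :
  val (ord_pred x) = if val x == 0%N then d.-1 else (val x).-1.
Proof.
rewrite /= modn_lt2; last by move: (ltn_ord x); lia.
by move: (ltn_ord x); case: eqP => h; case: ifP; lia.
Qed.

Lemma dif_pred (x y : 'I_d) : dif (ord_pred x) (ord_pred y) = dif x y.
Proof.
rewrite !difE !val_ord_pred.
destruct x as [[|a] ha], y as [[|b] hb]; rewrite /=; do ?[case: ifP => ?]; lia.
Qed.

Lemma pairmap_pred (x : 'I_d) w :
  pairmap dif (ord_pred x) (map (@ord_pred d) w) = pairmap dif x w.
Proof. by elim: w x => //= y w IH x; rewrite dif_pred IH. Qed.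

Lemma Qp_homog p : nc_homog (size p).+1 (Qp p).
Proof.
case=> [|x w] //= hw; case E: (all2 _ _ _) => //.
by move: hw; rewrite (all2_size E) size_pairmap eqxx.
Qed.

Lemma Qp_inv p : nc_invariant (Qp p).
Proof. by case=> [|x w] //=; rewrite /nc_rho /= pairmap_pred. Qed.

Lemma natr_and (b1 b2 : bool) : (b1%:R * b2%:R : K) = (b1 && b2)%:R.
Proof. by case: b1; case: b2; rewrite ?mulr1 ?mulr0. Qed.

Lemma Qp_mul p q : nc_mul (Qp p) (Qp q) = Qp (p ++ 0%N :: q).
Proof.
apply: functional_extensionality => w; rewrite (mul_homogL _ _ (@Qp_homog p)).
case: w => [|x w] //=; rewrite ltnS.
case: leqP => hp; last first.
  case E: (all2 _ _ _) => //; move: (all2_size E); rewrite size_pairmap size_cat /=.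
  by move: hp; lia.
rewrite -{3}(cat_take_drop (size p) w) pairmap_cat.
case E: (drop (size p) w) => [|y r] /=; first by rewrite mulr0; case F: (all2 _ _ _) => //;
  move: (all2_size F); rewrite cats0 size_pairmap size_cat size_take_min /=; move: hp; lia.
rewrite all2_cat /=; last by rewrite size_pairmap size_take_min; move: hp; lia.
by rewrite natr_and.
Qed.


Lemma valid_Z0 g : gen_valid Z0 g -> [/\ (0 < g.1)%N, cg g \in tup Aset g.1.-1 &
  nth (fun _ => 0) (Z0 g.1) g.2 = Qp (cg g)].
Proof.
case: g => [[|k] i] //; rewrite /gen_valid /= size_map => hi.
by rewrite /cg /= mem_nth // (nth_map [::]).
Qed.

Lemma cg_prop g : gen_valid Z0 g ->
  [/\ size (cg g) = g.1.-1, all (fun a => a != 0%N) (cg g) & all (fun a => a < d)%N (cg g)].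
Proof.
case/valid_Z0 => _; rewrite mem_tup => /andP[/eqP -> hA] _; split => //.
  by apply/allP => a /(allP hA); rewrite /= /Aset mem_iota; case: a.
by apply/allP => a /(allP hA); rewrite /= /Aset mem_iota; lia.
Qed.

Lemma mono_Z0 m : all (gen_valid Z0) m -> m != [::] -> gen_mono Z0 m = Qp (pat m).
Proof.
elim: m => [|g m IH] // /andP[hg hm] _.
rewrite -[gen_mono Z0 (g :: m)]/(nc_mul (nth (fun _ => 0) (Z0 g.1) g.2) (gen_mono Z0 m)).
case: (valid_Z0 hg) => _ _ ->.
case: m IH hm => [|g' m] IH hm.
  by rewrite /gen_mono /= mul1r_nc cats0.
by rewrite IH // Qp_mul.
Qed.

Lemma pat_prop m : (0 < d)%N -> all (gen_valid Z0) m -> m != [::] ->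
  count (pred1 0%N) (pat m) = (size m).-1 /\ all (fun a => a < d)%N (pat m).
Proof.
move=> dpos; elim: m => [|g m IH] //= /andP[hg hm] _.
case: (cg_prop hg) => _ hnz hlt.
have c0 : count (pred1 0%N) (cg g) = 0%N.
  by apply/eqP; rewrite -leqn0 leqNgt -has_count; apply/hasPn => a /(allP hnz).
case: m IH hm => [|g' m] IH hm; first by rewrite cats0 c0.
case: (IH hm isT) => h1 h2; rewrite count_cat c0 /= h1 all_cat hlt /= h2 andbT.
by rewrite dpos.
Qed.

Lemma cat0_inj (u v r r' : seq nat) :
  all (fun a => a != 0%N) u -> all (fun a => a != 0%N) v ->
  u ++ 0%N :: r = v ++ 0%N :: r' -> u = v /\ r = r'.
Proof.
elim: u v => [|a u IH] [|b v] //=.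
- by move=> _ _ [->].
- by move=> _ /andP[/negP hb _] [E]; rewrite E eqxx in hb.
- by move=> /andP[/negP ha _] _ [E]; rewrite -E eqxx in ha.
by move=> /andP[_ hu] /andP[_ hv] [-> E]; case: (IH _ hu hv E) => -> ->.
Qed.

Lemma cat0_neq (u v r : seq nat) :
  all (fun a => a != 0%N) v -> u ++ 0%N :: r = v -> False.
Proof.
move=> hv E; move: hv; rewrite -E all_cat /= andbF //.
Qed.

Lemma cg_inj g g' : gen_valid Z0 g -> gen_valid Z0 g' -> cg g = cg g' -> g = g'.
Proof.
move=> hg hg' E.
have [s1 _ _] := cg_prop hg; have [s2 _ _] := cg_prop hg'.
have [p1 _ _] := valid_Z0 hg; have [p2 _ _] := valid_Z0 hg'.
have e1 : g.1 = g'.1.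
  have h : g.1.-1 = g'.1.-1 by rewrite -s1 -s2 E.
  by move: h p1 p2; move: (g.1) (g'.1) => a b; lia.
clear s1 s2 p1 p2.
move: hg hg' E e1; case: g => k i; case: g' => k' i' /= hi hi' E e1; subst k'.
move: hi hi'; rewrite /gen_valid /= => hi hi'; congr pair.
move: E; rewrite /cg /=; move/eqP; rewrite nth_uniq //.
  by move/eqP.
- by move: hi hi'; case: k => //= k; rewrite size_map.
- by move: hi hi'; case: k => //= k; rewrite size_map.
by apply: uniq_tup; apply: iota_uniq.
Qed.

Lemma pat_inj m m' : all (gen_valid Z0) m -> all (gen_valid Z0) m' ->
  m != [::] -> m' != [::] -> pat m = pat m' -> m = m'.
Proof.
elim: m m' => [|g m IH] [|g' m'] //= /andP[hg hm] /andP[hg' hm'] _ _.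
have [_ nz _] := cg_prop hg; have [_ nz' _] := cg_prop hg'.
case: m IH hm => [|g1 m] IH hm; case: m' hm' => [|g1' m'] hm'.
- by rewrite !cats0 => /(cg_inj hg hg') ->.
- by rewrite cats0 => E; exfalso; apply: (cat0_neq nz (esym E)).
- by rewrite cats0 => E; exfalso; apply: (cat0_neq nz' E).
move=> /(cat0_inj nz nz') [/(cg_inj hg hg') -> E].
by rewrite (IH (g1' :: m')).
Qed.


Lemma all2_refl p : all2 mt p p.
Proof. by elim: p => //= a p ->; rewrite /mt eqxx orbT. Qed.

Lemma all2_count p' p : all2 mt p' p -> (count (pred1 0%N) p <= count (pred1 0%N) p')%N.
Proof.
elim: p' p => [|a p' IH] [|b p] //= /andP[hab /IH h].
move: hab; rewrite /mt => /orP[/eqP -> | /eqP ->].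
  by apply: leq_add => //; case: (b == 0%N).
exact: leq_add.
Qed.

Lemma all2_eq p' p : all2 mt p' p ->
  (count (pred1 0%N) p' <= count (pred1 0%N) p)%N -> p' = p.
Proof.
elim: p' p => [|a p' IH] [|b p] //= /andP[hab h].
move: hab; rewrite /mt => /orP[/eqP E | /eqP ->].
  subst a; case: (altP (b =P 0%N)) => hb.
    by subst b => /=; rewrite leq_add2l => /(IH _ h) ->.
  move=> hc; have := all2_count h; move: hc => /=.
  lia.
by rewrite leq_add2l => /(IH _ h) ->.
Qed.

Hypothesis dpos : (0 < d)%N.

Definition mkI (a : nat) : 'I_d := Ordinal (ltn_pmod a dpos).

Fixpoint tws (x : 'I_d) (p : seq nat) : seq 'I_d :=
  if p is a :: p' then mkI (x + a) :: tws (mkI (x + a)) p' else [::].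

Lemma dif_mkI (x : 'I_d) a : (a < d)%N -> dif x (mkI (x + a)) = a.
Proof.
move=> ha; rewrite difE /= modn_lt2; last by move: (ltn_ord x); lia.
move: (ltn_ord x) => hx; case: (ltnP (x + a) d) => h1; case: ifP => h2; lia.
Qed.

Lemma mkI_dif (x y : 'I_d) : mkI (x + dif x y) = y.
Proof.
apply: val_inj; rewrite /= difE.
have := ltn_ord x; have := ltn_ord y; case: ifP => h hy hx.
  by rewrite subnKC ?modn_small.
rewrite modn_lt2; last by lia.
by case: ifP => h2; lia.
Qed.

Lemma pairmap_tws (x : 'I_d) p : all (fun a => a < d)%N p -> pairmap dif x (tws x p) = p.
Proof. by elim: p x => //= a p IH x /andP[ha hp]; rewrite dif_mkI // IH. Qed.

Lemma tws_pairmap (x : 'I_d) w : tws x (pairmap dif x w) = w.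
Proof. by elim: w x => //= y w IH x; rewrite mkI_dif IH. Qed.

Lemma Qp_tw (x : 'I_d) p q : all (fun a => a < d)%N q ->
  Qp p (x :: tws x q) = (all2 mt p q)%:R.
Proof. by move=> hq; rewrite /Qp pairmap_tws. Qed.

Lemma Z0_indep (s : seq (seq (nat * nat))) (c : seq (nat * nat) -> K) :
  uniq s -> all (all (gen_valid Z0)) s ->
  (forall w, \sum_(m <- s) c m * gen_mono Z0 m w = 0) ->
  forall m, m \in s -> c m = 0.
Proof.
move=> us vs hs.
have core : forall m, m \in s ->
    (forall m', m' \in s -> (size m < size m')%N -> c m' = 0) -> c m = 0.
  move=> m ms IHm; have vm := allP vs m ms.
  case: (altP (m =P [::])) => m0.
    subst m; have := hs [::]; rewrite (bigD1_seq [::]) //= big1_seq ?addr0.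
      by rewrite /gen_mono /= /nc_one mulr1.
    move=> m' /andP[hne hm']; rewrite mono_Z0 //; last exact: allP vs m' hm'.
    by rewrite /= mulr0.
  set w := mkI 0 :: tws (mkI 0) (pat m).
  have [cm lt] := pat_prop dpos vm m0.
  have := hs w; rewrite (bigD1_seq m) //= mono_Z0 // Qp_tw // all2_refl mulr1.
  rewrite big1_seq ?addr0 // => m' /andP[hne hm']; have vm' := allP vs m' hm'.
  case: (altP (m' =P [::])) => m'0; first by subst m'; rewrite /gen_mono /= /nc_one mulr0.
  rewrite mono_Z0 // Qp_tw //; case E: (all2 mt (pat m') (pat m)); last by rewrite mulr0.
  have [cm' _] := pat_prop dpos vm' m'0.
  case: (ltnP (size m) (size m')) => hlt; first by rewrite IHm // mul0r.
  exfalso; have e := all2_eq E.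
  have : pat m' = pat m.
    by apply: e; rewrite cm cm' -!subn1 leq_sub2r.
  by move/(pat_inj vm' vm m'0 m0) => e'; move: hne; rewrite e' eqxx.
set B := \max_(m <- s) size m.
have key : forall t m, m \in s -> (B - size m <= t)%N -> c m = 0.
  elim=> [|t IH] m ms ht; apply: core => // m' hm' hlt.
    have := @leq_bigmax_seq _ s xpredT (fun m => size m) m' hm' isT.
    by rewrite -/B; move: ht hlt; lia.
  apply: IH => //; have := @leq_bigmax_seq _ s xpredT (fun m => size m) m' hm' isT.
  by rewrite -/B; move: ht hlt; lia.
by move=> m ms; apply: (key B) => //; exact: leq_subr.
Qed.

Fixpoint beta (F : seq nat -> K) (p : seq nat) {struct p} : K :=
  match p with
  | [::] => F [::]
  | a :: p' => beta (fun b => if a == 0%N then F (0%N :: b) else F (a :: b) - F (0%N :: b)) p'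
  end.

Definition Pall L := tup (iota 0 d) L.

Lemma Pall_prop L p : p \in Pall L -> size p = L /\ all (fun a => a < d)%N p.
Proof.
rewrite /Pall mem_tup => /andP[/eqP -> h]; split => //.
by apply/allP => a /(allP h); rewrite /= mem_iota.
Qed.

Lemma sum_mt a0 (H : nat -> K) : (a0 < d)%N ->
  \sum_(a <- iota 0 d) (mt a a0)%:R * H a = if a0 == 0%N then H 0%N else H 0%N + H a0.
Proof.
move=> ha0; have -> : iota 0 d = index_iota 0 d by rewrite /index_iota subn0.
rewrite big_mkord (bigD1 (Ordinal dpos)) //= /mt /= [1 * _]mul1r.
case: (altP (a0 =P 0%N)) => h0.
  rewrite big1 ?addr0 // => i hi; rewrite h0 orbb.
  by move: hi; rewrite -val_eqE /= => /negPf ->; rewrite mul0r.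
rewrite (bigD1 (Ordinal ha0)) /=; last by rewrite -val_eqE /=.
rewrite eqxx orbT [1 * _]mul1r big1 ?addr0 // => i /andP[h1 h2].
move: h1 h2; rewrite -!val_eqE /= => /negPf -> /negPf ->; by rewrite mul0r.
Qed.

Lemma beta_sum L : forall F b, b \in Pall L ->
  F b = \sum_(p <- Pall L) beta F p * (all2 mt p b)%:R.
Proof.
elim: L => [|L IH] F b.
  by rewrite /Pall /= inE => /eqP ->; rewrite big_seq1 /= mulr1.
rewrite {1}/Pall mem_tup; case: b => [|a0 b] //= /andP[hs /andP[ha0 hb]].
have hb' : b \in Pall L by rewrite /Pall mem_tup hb andbT; move: hs; rewrite ?eqSS.
rewrite /Pall /= big_allpairs_dep /=.
pose G a := fun b => if a == 0%N then F (0%N :: b) else F (a :: b) - F (0%N :: b).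
have inner : forall a, \sum_(s <- tup (iota 0 d) L) beta F (a :: s) * (mt a a0 && all2 mt s b)%:R
    = (mt a a0)%:R * G a b.
  move=> a; rewrite (IH (G a) b hb') mulr_sumr; apply: eq_bigr => s _.
  by rewrite -natr_and /= mulrCA.
rewrite (eq_bigr _ (fun a _ => inner a)) sum_mt; last by move: ha0; rewrite mem_iota.
rewrite /G /=; case: (altP (a0 =P 0%N)) => [-> // | h0].
by rewrite addrC subrK.
Qed.

Fixpoint mon (p : seq nat) : seq (nat * nat) :=
  match p with
  | [::] => [:: (1%N, 0%N)]
  | a :: p' => if a == 0%N then (1%N, 0%N) :: mon p' else
      (if mon p' is g :: m'' then (g.1.+1, index (a :: cg g) (tup Aset g.1)) :: m'' else [::])
  end.

Lemma mon_ok p : all (fun a => a < d)%N p ->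
  [/\ all (gen_valid Z0) (mon p), mon p != [::] & pat (mon p) = p].
Proof.
elim: p => [|a p IH] /=; first by rewrite /gen_valid /=.
case/andP => ha hp; have [v ne pe] := IH hp.
case: (altP (a =P 0%N)) => [-> | h0] /=.
  by split => //; case: (mon p) ne pe => // g m _ <-.
case E: (mon p) v ne pe => [|g m''] // /andP[hg hm] _ pe.
have [g1pos cgmem _] := valid_Z0 hg.
have mem' : a :: cg g \in tup Aset g.1.
  move: cgmem; rewrite !mem_tup /= => /andP[/eqP -> ->].
  rewrite prednK // eqxx andbT /Aset mem_iota; move: ha h0; lia.
split => //.
  by apply/andP; split => //; rewrite /gen_valid /= size_map index_mem.
rewrite -pe /= /cg /= nth_index //.
Qed.

Lemma f_diffs (f : P) : nc_invariant f -> forall x w,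
  f (x :: w) = f (mkI 0 :: tws (mkI 0) (pairmap dif x w)).
Proof.
move=> hf x; move: {2}(val x) (erefl (val x)) => k; elim: k x => [|k IH] x hx w.
  have -> : x = mkI 0 by apply: val_inj; rewrite /= mod0n.
  by rewrite tws_pairmap.
rewrite -(hf (x :: w)) /nc_rho /= (IH (ord_pred x)) ?pairmap_pred //.
by rewrite val_ord_pred hx.
Qed.

Lemma Z0_span (f : P) : nc_fin f -> nc_invariant f ->
  exists (s : seq (seq (nat * nat))) (c : seq (nat * nat) -> K),
    all (all (gen_valid Z0)) s /\ forall w, f w = \sum_(m <- s) c m * gen_mono Z0 m w.
Proof.
move=> [N hN] hf.
pose F := fun b => f (mkI 0 :: tws (mkI 0) b).
pose c (m : seq (nat * nat)) := if m is [::] then f [::] else beta F (pat m).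
exists ([::] :: flatten [seq map mon (Pall L) | L <- iota 0 N]), c; split.
  rewrite /= ; apply/allP => m /flattenP [ms /mapP [L _ ->] /mapP [p hp ->]].
  by have [_ /mon_ok []] := Pall_prop hp.
move=> w; rewrite big_cons big_flatten big_map /=.
have term : forall L p, p \in Pall L ->
    c (mon p) * gen_mono Z0 (mon p) w = beta F p * Qp p w.
  move=> L p /Pall_prop [_ /mon_ok [v ne pe]].
  rewrite mono_Z0 // pe /c; by case: (mon p) ne pe => // g m _ ->.
rewrite (eq_bigr (fun L => \sum_(p <- Pall L) beta F p * Qp p w)); last first.
  move=> L _; rewrite big_map big_seq [RHS]big_seq.
  by apply: eq_bigr => p hp; apply: term hp.
clear term; case: w => [|x w].
  rewrite /gen_mono /= /nc_one mulr1 big1 ?addr0 // => L _.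
  by rewrite big1 // => p _; rewrite mulr0.
rewrite /gen_mono /= /nc_one mulr0 add0r.
set pm := pairmap dif x w.
have Lne : forall L p, p \in Pall L -> L != size w -> beta F p * (all2 mt p pm)%:R = 0.
  move=> L p /Pall_prop [hs _] hL.
  case E: (all2 _ _ _); last by rewrite mulr0.
  by move: hL; rewrite -hs (all2_size E) size_pairmap eqxx.
rewrite /Qp -/pm.
case: (ltnP (size w) N) => hL.
  rewrite (bigD1_seq (size w)) ?mem_iota ?iota_uniq ?add0n //=.
  rewrite [X in _ + X]big1_seq ?addr0; last first.
    by move=> L /andP[hne _]; rewrite big_seq big1 // => p hp; apply: (Lne L).
  have hpm : pm \in Pall (size w).
    rewrite /Pall mem_tup size_pairmap eqxx /= /pm.
    by elim: (w) (x) => //= y w' IH x'; rewrite mem_iota /= dif_lt IH.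
  by rewrite (f_diffs hf) -/pm; apply: (beta_sum F hpm).
rewrite hN /=; last by apply: leqW.
rewrite big_seq big1 // => L; rewrite mem_iota => /andP[_ hLN].
rewrite big_seq big1 // => p hp; apply: (Lne L) => //.
by apply/eqP => E; move: hLN hL; rewrite E /=; lia.
Qed.

Lemma Z0_free : free_gens Z0.
Proof.
split; last exact: Z0_span.
  case=> [|k] i //=; rewrite size_map => hi; rewrite (nth_map [::]) //; split.
    have := mem_nth [::] hi; rewrite mem_tup => /andP[/eqP hs _].
    by rewrite -{1}hs; apply: Qp_homog.
  exact: Qp_inv.
exact: Z0_indep.
Qed.

End Pat.

Lemma Mrec0 a f : Mrec a f 0 = 1%N.
Proof. by case: f. Qed.

Lemma Mrec_ext a b f n : (forall k, (0 < k)%N -> (k <= n)%N -> a k = b k) ->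
  Mrec a f n = Mrec b f n.
Proof.
elim: f n => [|f IH] [|n] h //=; apply: eq_bigr => k _.
rewrite h // ?ltnS ?ltn_ord // IH // => j hj hj'; apply: h => //.
move: hj' (ltn_ord k); lia.
Qed.

Lemma geo_sum (d n : nat) : (0 < d)%N ->
  (\sum_(k < n.+1) d.-1 ^ k * (if (n - k)%N is j.+1 then d ^ j else 1))%N = (d ^ n)%N.
Proof.
move=> dpos; elim: n => [|n IH]; first by rewrite big_ord1.
rewrite big_ord_recl subn0 /=.
rewrite (eq_bigr (fun k : 'I_n.+1 => d.-1 * (d.-1 ^ k * (if (n - k)%N is j.+1 then d ^ j else 1)))%N);
  last by move=> k _; rewrite /bump add1n subSS expnS mulnA.
rewrite -big_distrr /= IH expn0 mul1n expnS.
by move: (d ^ n)%N => x; move: dpos; case: (d) => //= d' _; rewrite mulSn.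
Qed.

Lemma Mrec_geo (d : nat) f n : (0 < d)%N -> (n <= f)%N ->
  Mrec (fun k => d.-1 ^ k.-1)%N f n = (if n is j.+1 then d ^ j else 1)%N.
Proof.
move=> dpos; elim: f n => [|f IH] [|n] //= hn.
rewrite -(geo_sum n dpos); apply: eq_bigr => k _.
by rewrite IH // (leq_trans (leq_subr _ _)).
Qed.

Lemma size_Z0 (d : nat) (K : fieldType) k :
  size (Z0 d K k) = (if k is j.+1 then d.-1 ^ j else 0)%N.
Proof. by case: k => // j; rewrite /= size_map size_tup size_iota. Qed.

Lemma inv_dim_val (d : nat) (K : fieldType) n : (0 < d)%N ->
  inv_dim d K n = (if n is j.+1 then d ^ j else 1)%N.
Proof.
move=> dpos; rewrite (inv_dim_count n (Z0_free K dpos)) size_monsF.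
rewrite -(Mrec_geo dpos (leqnn n)); apply: Mrec_ext => k hk _.
by rewrite size_Z0; case: k hk.
Qed.

Lemma sizes_unique (d : nat) (K : fieldType) (Z : nat -> seq (ncpoly d K)) :
  (0 < d)%N -> free_gens Z ->
  forall n, size (Z n) = (if n is 0 then 0 else d.-1 ^ n.-1)%N.
Proof.
move=> dpos hZ n; case: n => [|n]; first by rewrite (Z0_nil hZ).
pose a := fun k => size (Z k); pose b := fun k => size (Z0 d K k).
have hM : forall n, Mrec a n n = Mrec b n n.
  move=> m; rewrite -!size_monsF -!inv_dim_count //; exact: Z0_free.
suff : a n.+1 = b n.+1 by rewrite /a /b size_Z0.
elim/ltn_ind: n => n IH.
have := hM n.+1; rewrite /= !big_ord_recr /= subnn !Mrec0 !muln1.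
have -> : (\sum_(i < n) a (widen_ord (leqnSn n) i).+1 *
             Mrec a n (n - widen_ord (leqnSn n) i))%N =
          (\sum_(i < n) b (widen_ord (leqnSn n) i).+1 *
             Mrec b n (n - widen_ord (leqnSn n) i))%N.
  apply: eq_bigr => i _ /=.
  have hab : forall k, (0 < k)%N -> (k <= n)%N -> a k = b k.
    by move=> [|k] // _ hk; apply: IH.
  rewrite hab ?ltn_ord //; congr (_ * _)%N; apply: Mrec_ext => k hk hk'.
  by apply: hab => //; rewrite (leq_trans hk') // leq_subr.
by move/addnI.
Qed.

Unset Implicit Arguments.

Theorem theorem3p1 (K : fieldType) (d : nat) :
  [pchar K] =i pred0 -> (2 <= d)%N ->
  ((* (i) H(t) (1 - d t) = 1 - (d-1) t as formal power series,
        i.e. agreement of all truncations modulo t^(N+1) *)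
   (forall N : nat,
      take_poly N.+1 ((1 - (d%:Z)%:P * 'X) * hilb_trunc d K N)
      = take_poly N.+1 (1 - (d%:Z - 1)%:P * 'X))
   /\ (forall n : nat, (1 <= n)%N -> inv_dim d K n = (d ^ n.-1)%N))
  /\
  ((* (ii) the invariant algebra is free on homogeneous generators, and every
        system of homogeneous free generators has generating function
        t/(1-(d-1)t): none in degree 0, (d-1)^(n-1) in degree n >= 1 *)
   (exists Z : nat -> seq (ncpoly d K), free_gens Z)
   /\ (forall Z : nat -> seq (ncpoly d K), free_gens Z ->
        forall n : nat, size (Z n) = (if n is 0 then 0 else (d.-1) ^ n.-1)%N)).
Proof.
move=> _ d2; have dpos : (0 < d)%N by apply: ltnW.
split; last first.
  split; first by exists (Z0 d K); apply: Z0_free.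
  by move=> Z hZ n; apply: sizes_unique.
split; last first.
  by move=> [|n] // _; rewrite inv_dim_val.
move=> N; apply/polyP => i; rewrite !coef_take_poly; case: ifP => // hi.
rewrite /hilb_trunc mulrBl mul1r coefB -mulrA coefCM coefXM !coef_poly.
rewrite coefB coef1 coefCM coefX.
case: i hi => [|[|i]] hi /=.
- by rewrite inv_dim_val // !mulr0 !subr0.
- by rewrite hi !inv_dim_val //= expn0 mulr1; lia.
rewrite hi (ltnW hi) !inv_dim_val //= expnS PoszM.
by rewrite subrr mulr0 subr0.
Qed.
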